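(* Let $n,k_1,k_2$ be nonnegative integers with $k_1+k_2\le n$ and $\ell=n-k_1-k_2$. Let $C$ be a $\mathbb{Z}_4$-code of length $n$ and type $4^{k_1}2^{k_2}$ which is inequivalent to the trivial extension of any $\mathbb{Z}_4$-code of length $n-1$ and type $4^{k_1}2^{k_2}$. Then there is a $\mathbb{Z}_4$-code $C'$ of length $n$ and type $4^{k_1}2^{k_2}$ with $C\cong C'$ having a generator matrix $G(A,B,D)\in\mathcal{V}$ such that the matrix $\begin{pmatrix}B\\2D\end{pmatrix}$ has no zero column.
   Context: $\mathbb{Z}_4=\{0,1,2,3\}$ is the ring of integers modulo $4$; a $\mathbb{Z}_4$-code of length $n$ is a submodule of $\mathbb{Z}_4^n$, and two codes are equivalent ($\cong$) if one is obtained from the other by permuting coordinates and changing the signs of some coordinates. A code has type $4^{k_1}2^{k_2}$ if it is permutation-equivalent to a code with generator matrix $G(A,B,D)=\begin{pmatrix} I_{k_1} & A & B\\ O & 2I_{k_2} & 2D\end{pmatrix}$ with $A$ a $k_1\times k_2$ $(0,1)$-matrix, $D$ a $k_2\times\ell$ $(0,1)$-matrix, $B$ a $k_1\times\ell$ $\mathbb{Z}_4$-matrix. The trivial extension of a code $C_0$ of length $n-1$ is $\{(c,0)\mid c\in C_0\}$. Order $\mathbb{Z}_4$ by $0<1<2<3$ and order vectors lexicographically. Let $M_{m\times n}(R)$ denote the set of $m\times n$ matrices with entries in $R$. For $T\subset M_{m\times n}(\mathbb{Z}_4)$ let $P_{row}(T)$ be the set of matrices in $T$ whose rows $a_1,\dots,a_m$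 satisfy $a_i\le a_j$ whenever $i\le j$, and $P_{col}(T)$ the set of matrices in $T$ whose columns $b_1,\dots,b_n$ satisfy $b_i^T\le b_j^T$ whenever $i\le j$. Let $\mathcal{S}=\{G(A,B,D)\mid A\in M_{k_1\times k_2}(\{0,1\}),\ B\in M_{k_1\times\ell}(\mathbb{Z}_4),\ D\in M_{k_2\times\ell}(\{0,1\})\}$, $\mathcal{T}=\{G(A,B,D)\in\mathcal{S}\mid A\in P_{row}(M_{k_1\times k_2}(\{0,1\}))\}$. Let $\mathcal{B}$ be the set consisting of all $k_1\times\ell$ matrices with entries in $\{0,2\}$ together with all $k_1\times\ell$ $\mathbb{Z}_4$-matrices $B$ such that, for the smallest $i$ for which the $i$-th row of $B$ contains an entry not in $\{0,2\}$, the $i$-th row of $B$ has all entries in $\{0,1,2\}$. Let $\mathcal{U}=\{G(A,B,D)\in\mathcal{T}\mid B\in\mathcal{B}\}$ and $\mathcal{V}=\{G(A,B,D)\in\mathcal{U}\mid \begin{pmatrix}B\\2D\end{pmatrix}\in P_{col}(M_{(k_1+k_2)\times\ell}(\mathbb{Z}_4))\}$. *)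

(* Defs.v *)
From HB Require Import structures.
From mathcomp Require Import all_boot all_order all_fingroup all_algebra.
Set Implicit Arguments. Unset Strict Implicit. Unset Printing Implicit Defensive.
Import GRing.Theory.
Local Open Scope ring_scope.

Notation Z4 := 'Z_4.

Definition mx_at (R : Type) (m p : nat) (x0 : R) (M : 'M[R]_(m, p)) (i j : nat) : R :=
  match (insub i : option 'I_m) with
  | Some i' => match (insub j : option 'I_p) with
               | Some j' => M i' j'
               | None => x0 end
  | None => x0 end.

Definition is_code (n : nat) (C : {set 'rV[Z4]_n}) : Prop :=
  0 \in C /\ (forall x y, x \in C -> y \in C -> x + y \in C)
  /\ (forall (a : Z4) x, x \in C -> a *: x \in C).

Definition gen_code (m n : nat) (G : 'M[Z4]_(m, n)) : {set 'rV[Z4]_n} :=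
  [set v *m G | v : 'rV[Z4]_m].

Definition permv (n : nat) (s : 'S_n) (x : 'rV[Z4]_n) : 'rV[Z4]_n :=
  \row_j x 0 (s j).
Definition signpermv (n : nat) (s : 'S_n) (e : 'I_n -> bool) (x : 'rV[Z4]_n)
  : 'rV[Z4]_n := \row_j ((if e j then -1 else 1) * x 0 (s j)).

Definition perm_equiv (n : nat) (C C' : {set 'rV[Z4]_n}) : Prop :=
  exists s : 'S_n, C' = [set permv s x | x in C].
Definition code_equiv (n : nat) (C C' : {set 'rV[Z4]_n}) : Prop :=
  exists (s : 'S_n) (e : 'I_n -> bool), C' = [set signpermv s e x | x in C].

(* The matrix G(A,B,D) = [[I_k1, A, B], [O, 2 I_k2, 2 D]], of size
   (k1+k2) x n, where l = n - k1 - k2 (meaningful when k1 + k2 <= n). *)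
Definition Gmat (n k1 k2 : nat) (A : 'M[Z4]_(k1, k2))
  (B : 'M[Z4]_(k1, n - k1 - k2)) (D : 'M[Z4]_(k2, n - k1 - k2))
  : 'M[Z4]_(k1 + k2, n) :=
  \matrix_(i, j)
    let i := nat_of_ord i in let j := nat_of_ord j in
    if (i < k1)%N then
      (if (j < k1)%N then (i == j)%:R
       else if (j < k1 + k2)%N then mx_at 0 A i (j - k1)%N
       else mx_at 0 B i (j - k1 - k2)%N)
    else
      (if (j < k1)%N then 0
       else if (j < k1 + k2)%N then 2%:R * (i - k1 == j - k1)%N%:R
       else 2%:R * mx_at 0 D (i - k1)%N (j - k1 - k2)%N).

Definition is01 (m p : nat) (M : 'M[Z4]_(m, p)) : Prop :=
  forall i j, (nat_of_ord (M i j) <= 1)%N.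

Definition has_type (n k1 k2 : nat) (C : {set 'rV[Z4]_n}) : Prop :=
  is_code C /\ (k1 + k2 <= n)%N /\
  exists (A : 'M[Z4]_(k1, k2)) (B : 'M[Z4]_(k1, n - k1 - k2))
         (D : 'M[Z4]_(k2, n - k1 - k2)),
    is01 A /\ is01 D /\ perm_equiv (gen_code (Gmat A B D)) C.

(* Trivial extension, as a code of length n, of a code C0 of length m
   (used with n = m + 1): { (c, 0) | c in C0 }. *)
Definition triv_ext (n m : nat) (C0 : {set 'rV[Z4]_m}) : {set 'rV[Z4]_n} :=
  [set x : 'rV[Z4]_n | [exists c in C0,
     [forall j : 'I_n, x 0 j == (if (j < m)%N then mx_at 0 c 0 j else 0)]]].

(* Lexicographic order on vectors, with 0 < 1 < 2 < 3 on Z4. *)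
Fixpoint lexle (s t : seq nat) : bool :=
  match s, t with
  | [::], _ => true
  | _ :: _, [::] => false
  | x :: s', y :: t' => (x < y)%N || ((x == y) && lexle s' t')
  end.

Definition rowseq (m p : nat) (M : 'M[Z4]_(m, p)) (i : 'I_m) : seq nat :=
  [seq nat_of_ord (M i j) | j <- enum 'I_p].
Definition colseq (m p : nat) (M : 'M[Z4]_(m, p)) (j : 'I_p) : seq nat :=
  [seq nat_of_ord (M i j) | i <- enum 'I_m].

Definition Prow (m p : nat) (M : 'M[Z4]_(m, p)) : Prop :=
  forall i j : 'I_m, (i <= j)%N -> lexle (rowseq M i) (rowseq M j).
Definition Pcol (m p : nat) (M : 'M[Z4]_(m, p)) : Prop :=
  forall i j : 'I_p, (i <= j)%N -> lexle (colseq M i) (colseq M j).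

Definition in02 (x : Z4) : bool := (nat_of_ord x == 0)%N || (nat_of_ord x == 2)%N.
Definition in012 (x : Z4) : bool := (nat_of_ord x <= 2)%N.

Definition inBset (k1 l : nat) (B : 'M[Z4]_(k1, l)) : Prop :=
  (forall i j, in02 (B i j)) \/
  (exists i : 'I_k1,
     (forall i' : 'I_k1, (i' < i)%N -> forall j, in02 (B i' j)) /\
     (exists j, ~~ in02 (B i j)) /\
     (forall j, in012 (B i j))).

Definition inV (n k1 k2 : nat) (A : 'M[Z4]_(k1, k2))
  (B : 'M[Z4]_(k1, n - k1 - k2)) (D : 'M[Z4]_(k2, n - k1 - k2)) : Prop :=
  is01 A /\ is01 D /\ Prow A /\ inBset B /\ Pcol (col_mx B (2%:R *: D)).

(* Main.v *)
Require Import Defs.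
From HB Require Import structures.
From mathcomp Require Import all_boot all_order all_fingroup all_algebra.
From mathcomp Require Import zify.
Set Implicit Arguments. Unset Strict Implicit. Unset Printing Implicit Defensive.
Import GRing.Theory.
Local Open Scope ring_scope.


Notation sg b := (if b then -1 else 1 : 'Z_4).

Lemma sg_in02 (b : bool) (x : 'Z_4) : in02 (sg b * x) = in02 x.
Proof. case: b; last by rewrite mul1r. by case: x => -[|[|[|[|//]]]]. Qed.
Lemma sg2 (b : bool) (x : 'Z_4) : sg b * (2%:R * x) = 2%:R * x.
Proof. case: b; last by rewrite mul1r. by case: x => -[|[|[|[|//]]]] ?; apply/val_inj. Qed.
Lemma sg3 (x : 'Z_4) : in012 (sg (nat_of_ord x == 3%N) * x).
Proof. by case: x => -[|[|[|[|//]]]]. Qed.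
Lemma sgM (a b : bool) : sg a * sg b = sg (a (+) b).
Proof. by case: a; case: b; rewrite /= ?mulrNN ?mulr1 ?mul1r ?mulN1r. Qed.

Definition natify (k : nat) (s : 'S_k) (x : nat) : nat :=
  if (insub x : option 'I_k) is Some x' then val (s x') else x.
Definition natb (k : nat) (e : 'I_k -> bool) (x : nat) : bool :=
  if (insub x : option 'I_k) is Some x' then e x' else false.

Lemma natifyE k (s : 'S_k) x (h : (x < k)%N) : natify s x = s (Ordinal h).
Proof. by rewrite /natify insubT. Qed.
Lemma natify_out k (s : 'S_k) x : (k <= x)%N -> natify s x = x.
Proof. by move=> h; rewrite /natify insubN // -leqNgt. Qed.
Lemma natify_lt k (s : 'S_k) x : (natify s x < k)%N = (x < k)%N.
Proof.
case: (ltnP x k) => h; first by rewrite natifyE ltn_ord.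
by rewrite natify_out // ltnNge h.
Qed.
Lemma natify_inj k (s : 'S_k) : injective (natify s).
Proof.
move=> x y.
case: (ltnP x k) => hx; case: (ltnP y k) => hy.
- rewrite !natifyE => /val_inj/perm_inj; by case.
- rewrite (natify_out s hy) => e. by move: (natify_lt s x); rewrite e hx ltnNge hy.
- rewrite (natify_out s hx) => e. by move: (natify_lt s y); rewrite -e hy ltnNge hx.
- by rewrite !natify_out.
Qed.
Lemma natify1 k x : natify (1 : 'S_k) x = x.
Proof. by rewrite /natify; case: insubP => // x' _ <-; rewrite perm1. Qed.
Lemma natb_false k x : natb (fun _ : 'I_k => false) x = false.
Proof. by rewrite /natb; case: insubP. Qed.

Lemma mx_atE (R : Type) m p (x0 : R) (M : 'M[R]_(m, p)) x y (hx : (x < m)%N) (hy : (y < p)%N) :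
  mx_at x0 M x y = M (Ordinal hx) (Ordinal hy).
Proof. by rewrite /mx_at !insubT. Qed.
Lemma mx_at_ord (R : Type) m p (x0 : R) (M : 'M[R]_(m, p)) (i : 'I_m) (j : 'I_p) :
  mx_at x0 M i j = M i j.
Proof. by rewrite /mx_at !valK. Qed.

Definition tr m p (M : 'M['Z_4]_(m, p)) (r : 'S_m) (c : 'S_p) (e : 'I_p -> bool) :=
  \matrix_(i, j) (sg (e j) * M (r i) (c j)).

Lemma mx_at_tr m p (M : 'M['Z_4]_(m, p)) r c e x y :
  mx_at 0 (tr M r c e) x y = sg (natb e y) * mx_at 0 M (natify r x) (natify c y).
Proof.
rewrite /mx_at /natify /natb.
case: insubP => [x' hx ex|hx]; case: insubP => [y' hy ey|hy];
  rewrite ?valK ?insubN ?mulr0 ?mxE //.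
Qed.

Lemma gen_tr m p (M : 'M['Z_4]_(m, p)) r c e :
  gen_code (tr M r c e) = [set signpermv c e x | x in gen_code M].
Proof.
have key : forall w : 'rV_m, (\row_i w 0 (r i)) *m tr M r c e = signpermv c e (w *m M).
  move=> w; apply/rowP => j; rewrite !mxE mulr_sumr [in RHS](reindex_inj (@perm_inj _ r)).
  by apply: eq_bigr => i _; rewrite !mxE mulrCA.
apply/setP => x; apply/imsetP/imsetP.
- case=> v _ ->.
  have -> : v = \row_i (\row_i v 0 ((r^-1)%g i)) 0 (r i).
    by apply/rowP => i; rewrite !mxE permK.
  rewrite key; exists ((\row_i v 0 ((r^-1)%g i)) *m M) => //.
  by apply/imsetP; exists (\row_i v 0 ((r^-1)%g i)).
- case=> y /imsetP [w _ ->] ->.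
  by exists (\row_i w 0 (r i)) => //; rewrite key.
Qed.

Lemma signperm_comp n (s1 s2 : 'S_n) e1 e2 (X : {set 'rV['Z_4]_n}) :
  [set signpermv s2 e2 y | y in [set signpermv s1 e1 x | x in X]] =
  [set signpermv (s2 * s1) (fun j => e2 j (+) e1 (s2 j)) x | x in X].
Proof.
rewrite -imset_comp; apply: eq_imset => x; apply/rowP => j.
by rewrite /= !mxE permM mulrA sgM.
Qed.

Lemma code_equiv_trans n (X Y Z : {set 'rV['Z_4]_n}) :
  code_equiv X Y -> code_equiv Y Z -> code_equiv X Z.
Proof.
case=> s1 [e1 ->] [s2 [e2 ->]].
by rewrite signperm_comp; do 2 eexists.
Qed.

Lemma perm_equiv_sym n (X C : {set 'rV['Z_4]_n}) :
  perm_equiv X C -> code_equiv C X.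
Proof.
case=> s ->; exists (s^-1)%g, (fun _ => false).
rewrite -imset_comp -[LHS]imset_id; apply: eq_imset => x; apply/rowP => j.
by rewrite /= !mxE mul1r permKV.
Qed.

Lemma gen_is_code m n (G : 'M['Z_4]_(m, n)) : is_code (gen_code G).
Proof.
split; first by apply/imsetP; exists 0; rewrite ?mul0mx.
split.
- move=> x y /imsetP [v _ ->] /imsetP [w _ ->]; apply/imsetP; exists (v + w) => //.
  by rewrite mulmxDl.
- move=> a x /imsetP [v _ ->]; apply/imsetP; exists (a *: v) => //.
  by rewrite scalemxAl.
Qed.

Lemma perm_equiv_refl n (X : {set 'rV['Z_4]_n}) : perm_equiv X X.
Proof.
exists 1%g; rewrite -[LHS]imset_id; apply: eq_imset => x; apply/rowP => j.
by rewrite !mxE perm1.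
Qed.

Lemma lexle_refl : reflexive lexle.
Proof. by elim=> //= x s IH; rewrite eqxx IH orbT. Qed.

Lemma lexle_trans : transitive lexle.
Proof.
elim=> [|y s IH] [|x r] [|z t] //=.
case/orP=> [lt1|/andP[/eqP e1 h1]]; case/orP=> [lt2|/andP[/eqP e2 h2]].
- by rewrite (ltn_trans lt1 lt2).
- by rewrite -e2 lt1.
- by rewrite e1 lt2.
- by rewrite e1 -e2 eqxx (IH _ _ h1 h2) orbT.
Qed.

Lemma lexle_total : total lexle.
Proof.
elim=> [|x s IH] [|y t] //=.
case: (ltngtP x y) => //= ->; by rewrite eqxx IH.
Qed.

Lemma sort_perm_exists (p : nat) (F : 'I_p -> seq nat) :
  exists pi : 'S_p, forall i j : 'I_p, (i <= j)%N -> lexle (F (pi i)) (F (pi j)).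
Proof.
pose r := fun x y : 'I_p => lexle (F x) (F y).
have rt : total r by move=> x y; apply: lexle_total.
have rtr : transitive r by move=> x y z; apply: lexle_trans.
have rrf : reflexive r by move=> x; apply: lexle_refl.
pose s := sort r (enum 'I_p).
have ps : perm_eq s (enum 'I_p) by rewrite perm_sort.
have us : uniq s by rewrite (perm_uniq ps) enum_uniq.
have ss : size s = p by rewrite (perm_size ps) size_enum_ord.
have srt : sorted r s by apply: sort_sorted.
pose f := fun i : 'I_p => nth i s i.
have fE : forall (i : 'I_p) (x0 : 'I_p), f i = nth x0 s i.
  by move=> i x0; rewrite /f (set_nth_default x0) // ss.
have finj : injective f.
  move=> i j; rewrite (fE j i) /f => /eqP; rewrite nth_uniq ?ss //.
  by move/eqP/val_inj.
exists (perm finj) => i j hij; rewrite !permE.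
rewrite (fE j i).
by apply: (sorted_leq_nth rtr rrf i srt) => //; rewrite inE ss.
Qed.

Lemma mkperm n (g : nat -> nat) :
  (forall x, (x < n)%N -> (g x < n)%N) -> injective g ->
  exists s : 'S_n, forall j, val (s j) = g j.
Proof.
move=> gb ginj.
pose f := fun j : 'I_n => Ordinal (gb _ (ltn_ord j)).
have finj : injective f by move=> i j [] /ginj /val_inj.
by exists (perm finj) => j; rewrite permE.
Qed.

Lemma Bset_sign k l (B : 'M['Z_4]_(k, l)) :
  exists e0, inBset (tr B 1%g 1%g e0).
Proof.
case: (boolP [forall i, forall j, in02 (B i j)]) => [/forallP H|H].
  exists (fun _ => false); left => i j; rewrite mxE !perm1 mul1r.
  by move/forallP: (H i).
pose P := fun x => [exists i : 'I_k, (val i == x) && [exists j, ~~ in02 (B i j)]].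
have exP : exists x, P x.
  move: H; rewrite negb_forall => /existsP [i]; rewrite negb_forall => hj.
  by exists (val i); apply/existsP; exists i; rewrite eqxx.
case: (ex_minnP exP) => x0 /existsP [i0 /andP [/eqP hi0 /existsP [j0 hj0]]] hmin.
exists (fun j => nat_of_ord (B i0 j) == 3%N); right; exists i0; split; [|split].
- move=> i' hi' j; rewrite mxE !perm1 sg_in02; apply/negPn/negP => hb.
  have : (x0 <= i')%N by apply: hmin; apply/existsP; exists i'; rewrite eqxx; apply/existsP; exists j.
  by rewrite -hi0 leqNgt hi'.
- by exists j0; rewrite mxE !perm1 sg_in02.
- by move=> j; rewrite mxE !perm1 sg3.
Qed.

Lemma Bset_col k l (B : 'M['Z_4]_(k, l)) (pi : 'S_l) :
  inBset B -> inBset (tr B 1%g pi (fun _ => false)).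
Proof.
case=> [H|[i0 [h1 [[j0 h2] h3]]]].
  by left => i j; rewrite mxE perm1 mul1r.
right; exists i0; split; [|split].
- by move=> i' hi' j; rewrite mxE perm1 mul1r h1.
- by exists ((pi^-1)%g j0); rewrite mxE perm1 mul1r permKV.
- by move=> j; rewrite mxE perm1 mul1r.
Qed.

Lemma rowseq_tr m p (M : 'M['Z_4]_(m, p)) r i :
  rowseq (tr M r 1%g (fun _ => false)) i = rowseq M (r i).
Proof. by apply: eq_map => j; rewrite mxE perm1 mul1r. Qed.

Lemma colseq_tr m p (M : 'M['Z_4]_(m, p)) c j :
  colseq (tr M 1%g c (fun _ => false)) j = colseq M (c j).
Proof. by apply: eq_map => i; rewrite mxE perm1 mul1r. Qed.

Definition tn k1 k2 l (s : 'S_k1) (pi : 'S_l) (y : nat) : nat :=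
  if (y < k1 + k2)%N then natify s y else (k1 + k2 + natify pi (y - k1 - k2))%N.

Lemma tn_inj k1 k2 l (s : 'S_k1) (pi : 'S_l) : injective (tn k2 s pi).
Proof.
have h1 : forall y, (y < k1 + k2)%N -> (natify s y < k1 + k2)%N.
  move=> y hy; case: (ltnP y k1) => h; first by move: (natify_lt s y); rewrite h; lia.
  by rewrite natify_out.
move=> x y; rewrite /tn.
case: (ltnP x (k1+k2)) => hx; case: (ltnP y (k1+k2)) => hy.
- by apply: natify_inj.
- move: (h1 _ hx); lia.
- move: (h1 _ hy); lia.
- move=> /addnI /natify_inj; lia.
Qed.

Lemma Gmat_tr n k1 k2 (hk : (k1 + k2 <= n)%N) (A : 'M['Z_4]_(k1, k2))
  (B : 'M['Z_4]_(k1, n - k1 - k2)) (D : 'M['Z_4]_(k2, n - k1 - k2))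
  (s : 'S_k1) (pi : 'S_(n - k1 - k2)) (e : 'I_(n - k1 - k2) -> bool) :
  exists r : 'S_(k1 + k2), exists t : 'S_n, exists E,
    Gmat (tr A s 1%g (fun _ => false)) (tr B s pi e) (tr D 1%g pi (fun _ => false))
    = tr (Gmat A B D) r t E.
Proof.
have [r hr] : exists r : 'S_(k1 + k2), forall j, val (r j) = natify s j.
  apply: mkperm; last exact: natify_inj.
  move=> x hx; case: (ltnP x k1) => h; first by move: (natify_lt s x); rewrite h; lia.
  by rewrite natify_out.
have [t ht] : exists t : 'S_n, forall j, val (t j) = tn k2 s pi j.
  apply: mkperm; last exact: tn_inj.
  move=> x hx; rewrite /tn; case: ifP => h.
    case: (ltnP x k1) => h'; first by move: (natify_lt s x); rewrite h'; lia.
    by rewrite natify_out //; lia.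
  have : (natify pi (x - k1 - k2) < n - k1 - k2)%N by rewrite natify_lt; lia.
  lia.
exists r, t, (fun j : 'I_n => (k1 + k2 <= j)%N && natb e (j - k1 - k2)).
apply/matrixP => i j; rewrite !mxE /= hr ht !mx_at_tr !natify1 !natb_false.
move: (ltn_ord i) (ltn_ord j); rewrite /tn.
move: (nat_of_ord i) (nat_of_ord j) => x y hx hy.
rewrite natify_lt.
case: (ltnP y (k1 + k2)) => hy2 /=.
  rewrite natify_lt; case: (ltnP y k1) => hy1.
    case: (ltnP x k1) => hx1; first by rewrite (inj_eq (@natify_inj _ s)) mul1r.
    by rewrite mul1r.
  rewrite (natify_out s hy1) hy2.
  case: (ltnP x k1) => hx1 //; by rewrite (natify_out s hx1) !mul1r.
set z := natify pi (y - k1 - k2).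
have h1 : (k1 + k2 + z < k1)%N = false by lia.
have h2 : (k1 + k2 + z < k1 + k2)%N = false by lia.
have h3 : (k1 + k2 + z - k1 - k2)%N = z by lia.
have h4 : (y < k1)%N = false by lia.
rewrite h1 h2 h3 h4.
case: (ltnP x k1) => hx1 //=.
by rewrite (natify_out s hx1) mul1r sg2.
Qed.

Lemma mx_atE' (R : Type) m p (x0 : R) (M : 'M[R]_(m, p)) (i : 'I_m) (j : 'I_p) (x y : nat) :
  x = i -> y = j -> mx_at x0 M x y = M i j.
Proof. by move=> -> ->; apply: mx_at_ord. Qed.

Lemma mx_at_mx (R : Type) m p (x0 : R) (F : nat -> nat -> R) x y :
  mx_at x0 (\matrix_(i < m, j < p) F i j) x y = if (x < m)%N && (y < p)%N then F x y else x0.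
Proof.
case: (ltnP x m) => hx; case: (ltnP y p) => hy /=.
- by rewrite (mx_atE _ _ hx hy) mxE.
- by rewrite /mx_at insubT insubN // -leqNgt.
- by rewrite /mx_at insubN // -leqNgt.
- by rewrite /mx_at insubN // -leqNgt.
Qed.

Lemma is01_at m p (M : 'M['Z_4]_(m, p)) x y : is01 M -> (nat_of_ord (mx_at 0%R M x y) <= 1)%N.
Proof. by move=> h; rewrite /mx_at; case: insubP => [x' _ _|//]; case: insubP. Qed.

Lemma triv_gen r m (G : 'M['Z_4]_(r, m.+1)) (G0 : 'M['Z_4]_(r, m)) :
  (forall i (j : 'I_m.+1) (hj : (j < m)%N), G i j = G0 i (Ordinal hj)) ->
  (forall i (j : 'I_m.+1), ~~ (j < m)%N -> G i j = 0) ->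
  gen_code G = triv_ext m.+1 (gen_code G0).
Proof.
move=> H1 H2.
have F : forall (v : 'rV_r) (j : 'I_m.+1),
    (v *m G) 0 j = if (j < m)%N then mx_at 0 (v *m G0) 0 j else 0.
  move=> v j; rewrite mxE; case: ifP => hj.
    rewrite (@mx_atE' _ _ _ _ _ 0 (Ordinal hj)) // mxE.
    by apply: eq_bigr => i _; rewrite H1.
  by rewrite big1 // => i _; rewrite H2 ?hj // mulr0.
apply/setP => x; rewrite inE; apply/imsetP/existsP.
- case=> v _ ->; exists (v *m G0); apply/andP; split; first by apply/imsetP; exists v.
  by apply/forallP => j; rewrite F.
- case=> c /andP [/imsetP [v _ ->] /forallP H]; exists v => //.
  by apply/rowP => j; rewrite (eqP (H j)) F.
Qed.

Lemma zero_col m n k1 k2 (hm : m.+1 = n) (A : 'M['Z_4]_(k1, k2))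
  (B : 'M['Z_4]_(k1, n - k1 - k2)) (D : 'M['Z_4]_(k2, n - k1 - k2))
  (j0 : 'I_(n - k1 - k2)) :
  is01 A -> is01 D -> (forall i, col_mx B (2%:R *: D) i j0 = 0) ->
  exists C0 : {set 'rV['Z_4]_m},
    has_type k1 k2 C0 /\ code_equiv (gen_code (Gmat A B D)) (triv_ext n C0).
Proof.
move=> hA hD hz; subst n.
have hk0 : (k1 + k2 <= m)%N by move: (ltn_ord j0); lia.
pose B0 := \matrix_(i < k1, j < m - k1 - k2) mx_at 0 B i (bump j0 j).
pose D0 := \matrix_(i < k2, j < m - k1 - k2) mx_at 0 D i (bump j0 j).
exists (gen_code (Gmat A B0 D0)); split.
  split; first exact: gen_is_code.
  split => //; exists A, B0, D0; split => //; split; last exact: perm_equiv_refl.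
  by move=> i j; rewrite mxE is01_at.
have hc : (k1 + k2 + j0 < m.+1)%N by move: (ltn_ord j0); lia.
pose c : 'I_m.+1 := Ordinal hc.
pose t := lift_perm ord_max c 1%g.
have -> : triv_ext m.+1 (gen_code (Gmat A B0 D0)) =
          [set signpermv t (fun _ => false) x | x in gen_code (Gmat A B D)].
  rewrite -(gen_tr _ 1%g); symmetry; apply: triv_gen.
  - move=> i j hj.
    have tj : val (t j) = bump c j.
      have ej : j = lift ord_max (Ordinal hj).
        by apply: val_inj; rewrite /= /bump leqNgt hj.
      by rewrite {1}ej /t lift_perm_lift perm1.
    rewrite mxE perm1 mul1r !mxE /= tj.
    rewrite /B0 /D0 (@mx_at_mx _ _ _ 0 (fun x y => mx_at 0 B x (bump j0 y))) (@mx_at_mx _ _ _ 0 (fun x y => mx_at 0 D x (bump j0 y))).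
    move: (ltn_ord i); move: (nat_of_ord i) => x hx.
    rewrite /bump /=.
    case: (leqP (k1 + k2 + j0) j) => hcj; case: (leqP j0 (j - k1 - k2)) => hj0 /=;
      try (exfalso; lia).
    + have e1 : (1 + j < k1)%N = false by lia.
      have e2 : (1 + j < k1 + k2)%N = false by lia.
      have e3 : (j < k1 + k2)%N = false by lia.
      have e4 : (j < k1)%N = false by lia.
      have e5 : (j - k1 - k2 < m - k1 - k2)%N by lia.
      have e6 : (1 + j - k1 - k2 = 1 + (j - k1 - k2))%N by lia.
      rewrite e1 e2 e3 e4 e5 e6 andbT.
      case: (ltnP x k1) => hx1 //=.
      by have -> : (x - k1 < k2)%N by lia.
    + rewrite !add0n.
      case: (ltnP j k1) => hj1 //=.
      case: (ltnP j (k1 + k2)) => hj2 //=; exfalso; lia.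
    + rewrite !add0n.
      case: (ltnP j k1) => hj1 //=.
      case: (ltnP j (k1 + k2)) => hj2 //=.
      have e5 : (j - k1 - k2 < m - k1 - k2)%N by lia.
      rewrite e5 andbT.
      case: (ltnP x k1) => hx1 //=.
      by have -> : (x - k1 < k2)%N by lia.
  - move=> i j hj.
    have -> : j = ord_max by apply: val_inj => /=; move: (ltn_ord j) hj; lia.
    rewrite mxE perm1 mul1r /t lift_perm_id mxE /=.
    have e1 : (k1 + k2 + j0 < k1)%N = false by lia.
    have e2 : (k1 + k2 + j0 < k1 + k2)%N = false by lia.
    have e3 : (k1 + k2 + j0 - k1 - k2 = j0)%N by lia.
    rewrite e1 e2 e3.
    case: (splitP i) => [i' hi'|i' hi'].
      have ei : i = lshift k2 i' by apply: val_inj.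
      rewrite hi' ?ltn_ord (@mx_atE' _ _ _ _ _ i' j0) //.
      by rewrite -(col_mxEu B (2%:R *: D)) -ei hz.
    have ei : i = rshift k1 i' by apply: val_inj.
    rewrite hi' (@mx_atE' _ _ _ _ _ i' j0) //; last lia.
    by move: (hz i); rewrite ei col_mxEd mxE.
by exists t, (fun _ => false).
Qed.

Unset Implicit Arguments.
Theorem mainTheorem12 (n k1 k2 : nat) (hk : (k1 + k2 <= n)%N)
  (C : {set 'rV['Z_4]_n}) :
  has_type k1 k2 C ->
  (forall (m : nat) (C0 : {set 'rV['Z_4]_m}), m.+1 = n ->
     has_type k1 k2 C0 -> ~ code_equiv C (triv_ext n C0)) ->
  exists C' : {set 'rV['Z_4]_n},
    has_type k1 k2 C' /\ code_equiv C C' /\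
    exists (A : 'M['Z_4]_(k1, k2)) (B : 'M['Z_4]_(k1, n - k1 - k2))
           (D : 'M['Z_4]_(k2, n - k1 - k2)),
      inV A B D /\ C' = gen_code (Gmat A B D) /\
      (forall j : 'I_(n - k1 - k2), exists i : 'I_(k1 + k2),
         col_mx B (2%:R *: D) i j != 0).
Proof.
move=> [_ [_ [A [B [D [hA [hD hpe]]]]]]] hnot.
have hCG := perm_equiv_sym hpe.
have [s hs] := sort_perm_exists (rowseq A).
pose B1 := tr B s 1%g (fun _ => false).
have [e0 he0] := Bset_sign B1.
pose M2 := col_mx (tr B1 1%g 1%g e0) (2%:R *: D).
have [pi hpi] := sort_perm_exists (colseq M2).
pose A' := tr A s 1%g (fun _ => false).
pose B' := tr B s pi (fun j => e0 (pi j)).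
pose D' := tr D 1%g pi (fun _ => false).
have [r [t [E hG]]] := Gmat_tr hk A B D s pi (fun j => e0 (pi j)).
have hB' : B' = tr (tr B1 1%g 1%g e0) 1%g pi (fun _ => false).
  by apply/matrixP => i j; rewrite !mxE !perm1 !mul1r.
have hcol : col_mx B' (2%:R *: D') = tr M2 1%g pi (fun _ => false).
  apply/matrixP => i j; rewrite !mxE perm1 mul1r.
  by case: (split i) => a; rewrite !mxE !perm1 !mul1r.
have hC' : gen_code (Gmat A' B' D') = [set signpermv t E x | x in gen_code (Gmat A B D)].
  by rewrite hG gen_tr.
have hCC' : code_equiv C (gen_code (Gmat A' B' D')).
  by apply: (code_equiv_trans hCG); rewrite hC'; exists t, E.
have hA' : is01 A' by move=> i j; rewrite mxE mul1r hA.
have hD' : is01 D' by move=> i j; rewrite mxE mul1r hD.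
exists (gen_code (Gmat A' B' D')); split.
  split; first exact: gen_is_code.
  split => //; exists A', B', D'; do 2 split => //; exact: perm_equiv_refl.
split => //; exists A', B', D'; split; last split => //.
  split => //; split => //; split; last split.
  - by move=> i j hij; rewrite !rowseq_tr; apply: hs.
  - by rewrite hB'; apply: Bset_col.
  - by rewrite hcol => i j hij; rewrite !colseq_tr; apply: hpi.
move=> j.
case: (boolP [exists i, col_mx B' (2%:R *: D') i j != 0]) => [/existsP //|H].
exfalso.
have hz : forall i, col_mx B' (2%:R *: D') i j = 0.
  by move=> i; apply/eqP; move: H; rewrite negb_exists => /forallP /(_ i); rewrite negbK.
have hn : (n.-1).+1 = n by move: (ltn_ord j); lia.
have [C0 [hC0 heq]] := zero_col hn hA' hD' hz.
exact: (hnot _ C0 hn hC0 (code_equiv_trans hCC' heq)).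
Qed.
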